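(* Let $(a_n)_{n\ge1}$ be a non-negative sequence and define $b_n = \sum_{l=1}^n 2^{l-n}a_l$. If $\sum_{n=1}^\infty a_n < +\infty$, then $\liminf_{n\to\infty} n b_n = 0$. *)

(* Defs.v *)
From Stdlib Require Import Reals.
From Coquelicot Require Import Coquelicot.
Open Scope R_scope.

(* b_n = sum_{l=1}^n 2^(l-n) a_l, for n >= 1 (b_0 = 0, unused). *)
Definition bseq (a : nat -> R) (n : nat) : R :=
  sum_n_m (fun l => Rpower 2 (INR l - INR n) * a l) 1 n.

(* Main.v *)
Require Import Defs.
From Stdlib Require Import Reals Lra Lia Classical.
From Coquelicot Require Import Coquelicot.
Open Scope R_scope.

Lemma bseq_0 a : bseq a 0 = 0.
Proof. unfold bseq. rewrite sum_n_m_zero; [reflexivity|lia]. Qed.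

Lemma bseq_S a N : bseq a (S N) = bseq a N / 2 + a (S N).
Proof.
  unfold bseq. rewrite sum_n_Sm; [|lia].
  change (plus ?x ?y) with (x + y).
  replace (INR (S N) - INR (S N)) with 0 by ring.
  rewrite Rpower_O by lra.
  f_equal; [|ring].
  rewrite (sum_n_m_ext _ (fun l => mult (Rpower 2 (INR l - INR N) * a l) (/ 2))).
  - rewrite sum_n_m_mult_r. reflexivity.
  - intros l. change (mult ?x ?y) with (x * y).
    assert (E : INR l - INR (S N) = (INR l - INR N) + - (1)) by (rewrite S_INR; lra).
    rewrite E.
    rewrite Rpower_plus, Rpower_Ropp, Rpower_1 by lra.
    match goal with |- ?x = ?y => change (@eq R x y) end. field.
Qed.

Lemma bseq_nonneg a (ha : forall n, (1 <= n)%nat -> 0 <= a n) N : 0 <= bseq a N.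
Proof.
  induction N. rewrite bseq_0; lra.
  rewrite bseq_S. assert (0 <= a (S N)) by (apply ha; lia). lra.
Qed.

Definition BB a N := sum_n_m (bseq a) 1 N.
Definition AA (a : nat -> R) N := sum_n_m a 1 N.

Lemma BA a N : BB a N + bseq a N <= 2 * AA a N.
Proof.
  induction N.
  - unfold BB, AA. rewrite bseq_0, !sum_n_m_zero by lia. change (zero:R) with 0. lra.
  - unfold BB, AA in *. rewrite !sum_n_Sm by lia. change (plus ?x ?y) with (x + y).
    rewrite !bseq_S in *. lra.
Qed.

Lemma BB_nonneg a (ha : forall n, (1 <= n)%nat -> 0 <= a n) N : 0 <= BB a N.
Proof.
  induction N.
  - unfold BB. rewrite sum_n_m_zero by lia. change (zero:R) with 0. lra.
  - unfold BB in *. rewrite sum_n_Sm by lia. change (plus ?x ?y) with (x + y).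
    pose proof (bseq_nonneg a ha (S N)). lra.
Qed.

Theorem lemma7 (a : nat -> R) (ha : forall n, (1 <= n)%nat -> 0 <= a n)
  (hsum : ex_series (fun k => a (S k))) :
  LimInf_seq (fun k => INR (S k) * bseq a (S k)) = Finite 0.
Proof.
  set (S0 := Series (fun k => a (S k))).
  assert (HA : forall N, AA a N <= S0).
  { assert (Hl : is_lim_seq (sum_n (fun k => a (S k))) S0) by exact (Series_correct _ hsum).
    assert (Hc := is_lim_seq_incr_compare _ _ Hl).
    assert (Hinc : forall n, sum_n (fun k => a (S k)) n <= sum_n (fun k => a (S k)) (S n)).
    { intros n. unfold sum_n. rewrite sum_n_Sm by lia. change (plus ?x ?y) with (x + y).
      pose proof (ha (S (S n)) ltac:(lia)). lra. }
    intros N. assert (E : forall n, AA a (S n) = sum_n (fun k => a (S k)) n).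
    { intros n. unfold AA, sum_n. rewrite sum_n_m_S. reflexivity. }
    destruct N.
    - unfold AA. rewrite sum_n_m_zero by lia. change (zero:R) with 0.
      specialize (Hc Hinc 0%nat). unfold sum_n in Hc. rewrite sum_n_n in Hc.
      pose proof (ha 1%nat ltac:(lia)). lra.
    - rewrite E. apply Hc, Hinc. }
  apply is_LimInf_seq_unique. intros eps. split.
  2:{ exists 0%nat. intros n _. pose proof (bseq_nonneg a ha (S n)).
      pose proof (pos_INR (S n)). pose proof (cond_pos eps).
      assert (0 <= INR (S n) * bseq a (S n)) by (apply Rmult_le_pos; lra). lra. }
  intros N. apply NNPP. intros Hn.
  pose proof (cond_pos eps) as Heps.
  assert (Hb : forall m, (N < m)%nat -> eps / INR m <= bseq a m).
  { intros m Hm. destruct m as [|k]; [lia|].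
    assert (H : ~ INR (S k) * bseq a (S k) < 0 + eps).
    { intros H. apply Hn. exists k. split; [lia|exact H]. }
    apply Rnot_lt_le in H.
    assert (0 < INR (S k)) by (apply lt_0_INR; lia).
    apply (Rmult_le_reg_l (INR (S k))); [lra|]. field_simplify; lra. }
  assert (Hblk : forall M, (N < M)%nat -> forall j, (j <= M)%nat ->
            INR j * (eps / (2 * INR M)) <= sum_n_m (bseq a) (S M) (M + j)).
  { intros M HM j. induction j; intros Hj.
    - rewrite sum_n_m_zero by lia. change (zero:R) with 0. simpl. lra.
    - rewrite Nat.add_succ_r, sum_n_Sm by lia. change (plus ?x ?y) with (x + y).
      assert (h1 := IHj ltac:(lia)).
      assert (h2 := Hb (S (M + j)) ltac:(lia)).
      assert (0 < INR M) by (apply lt_0_INR; lia).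
      assert (INR (S (M + j)) <= 2 * INR M).
      { assert (hh : INR (S (M + j)) <= INR (2 * M)) by (apply le_INR; lia).
        rewrite mult_INR in hh. replace (INR 2) with 2 in hh by (simpl; lra). lra. }
      assert (0 < INR (S (M + j))) by (apply lt_0_INR; lia).
      assert (eps / (2 * INR M) <= eps / INR (S (M + j))).
      { unfold Rdiv. apply Rmult_le_compat_l; [lra|]. apply Rinv_le_contravar; lra. }
      rewrite S_INR. lra. }
  assert (Hdbl : forall M, (N < M)%nat -> BB a M + eps / 2 <= BB a (2 * M)).
  { intros M HM. unfold BB. rewrite (sum_n_m_Chasles _ 1 M (2 * M)) by lia.
    change (plus ?x ?y) with (x + y).
    replace (2 * M)%nat with (M + M)%nat by lia.
    assert (h := Hblk M HM M (le_n _)).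
    assert (0 < INR M) by (apply lt_0_INR; lia).
    replace (INR M * (eps / (2 * INR M))) with (eps / 2) in h by (field; lra). lra. }
  assert (Hk : forall k, INR k * (eps / 2) <= BB a (2 ^ k * S N)).
  { induction k.
    - rewrite Nat.pow_0_r, Nat.mul_1_l. pose proof (BB_nonneg a ha (S N)). simpl INR. lra.
    - rewrite S_INR. replace (2 ^ S k * S N)%nat with (2 * (2 ^ k * S N))%nat
        by (simpl; lia).
      assert (N < 2 ^ k * S N)%nat.
      { pose proof (Nat.pow_nonzero 2 k ltac:(lia)). nia. }
      pose proof (Hdbl _ H). lra. }
  assert (HS0 : 0 <= S0) by (pose proof (HA 0%nat); unfold AA in *;
     rewrite sum_n_m_zero in * by lia; change (zero:R) with 0 in *; lra).
  destruct (nfloor_ex (4 * S0 / eps + 1)) as [k [Hk1 Hk2]].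
  { apply Rplus_le_le_0_compat; [|lra]. apply Rmult_le_pos; [lra|].
    apply Rlt_le, Rinv_0_lt_compat; lra. }
  pose proof (Hk (S k)) as H1. rewrite S_INR in H1.
  pose proof (BA a (2 ^ S k * S N)).
  pose proof (HA (2 ^ S k * S N)%nat).
  pose proof (bseq_nonneg a ha (2 ^ S k * S N)).
  assert (4 * S0 < (INR k + 1) * eps).
  { apply (Rmult_lt_reg_r (/ eps)). apply Rinv_0_lt_compat; lra.
    replace ((INR k + 1) * eps * / eps) with (INR k + 1) by (field; lra).
    unfold Rdiv in Hk2. lra. }
  lra.
Qed.
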